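(* The Lipschitz quaternionic modular group $PSL(2,\mathfrak L)$ is a subgroup of index $3$ of the Hurwitz quaternionic modular group $PSL(2,\mathfrak H)$.
   Context: $\mathbb H$ is the real quaternions. Quaternionic matrices $\begin{pmatrix}a&b\\c&d\end{pmatrix}$ act by $q\mapsto(aq+b)(cq+d)^{-1}$, and matrices differing by a nonzero real scalar are identified. Let $\Im\mathbb H(\mathbb Z)=\{b\mathbf i+c\mathbf j+d\mathbf k: b,c,d\in\mathbb Z\}$; for $\omega\in\Im\mathbb H(\mathbb Z)$ let $\tau_\omega(q)=q+\omega$ (matrix $\begin{pmatrix}1&\omega\\0&1\end{pmatrix}$), and let $T(q)=q^{-1}$ (matrix $\begin{pmatrix}0&1\\1&0\end{pmatrix}$). $PSL(2,\mathfrak L)$ is the group generated by $T$ and all $\tau_\omega$, $\omega\in\Im\mathbb H(\mathbb Z)$. The Hurwitz units are the 24 quaternions $\pm1,\pm\mathbf i,\pm\mathbf j,\pm\mathbf k,\frac12(\pm1\pm\mathbf i\pm\mathbf j\pm\mathbf k)$. For a Hurwitz unit $u$ let $D_u=\begin{pmatrix}u&0\\0&u\end{pmatrix}$, acting by $q\mapsto uqu^{-1}$; $\mathcal U(\mathfrak H)=\{D_u\}$ is a group of 12 transformations. $PSL(2,\mathfrak H)$ is the group generated by $T$, all $\tau_\omega$ ($\omega\in\Im\mathbb H(\mathbb Z)$) and $\mathcal U(\mathfrak H)$. *)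

(* Defs.v *)
From Stdlib Require Import Reals ZArith Arith.
Open Scope R_scope.

Record quat := Quat { qr : R; qi : R; qj : R; qk : R }.

Definition qzero : quat := Quat 0 0 0 0.
Definition qone : quat := Quat 1 0 0 0.
Definition qadd (x y : quat) : quat :=
  Quat (qr x + qr y) (qi x + qi y) (qj x + qj y) (qk x + qk y).
(* Hamilton product, with i j = k, j k = i, k i = j, i^2 = j^2 = k^2 = -1. *)
Definition qmul (x y : quat) : quat :=
  Quat (qr x * qr y - qi x * qi y - qj x * qj y - qk x * qk y)
       (qr x * qi y + qi x * qr y + qj x * qk y - qk x * qj y)
       (qr x * qj y - qi x * qk y + qj x * qr y + qk x * qi y)
       (qr x * qk y + qi x * qj y - qj x * qi y + qk x * qr y).
Definition qscale (l : R) (x : quat) : quat :=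
  Quat (l * qr x) (l * qi x) (l * qj x) (l * qk x).

(* 2x2 quaternionic matrices [[a, b], [c, d]]. *)
Record mat2 := Mat2 { ma : quat; mb : quat; mc : quat; md : quat }.

Definition mmul (A B : mat2) : mat2 :=
  Mat2 (qadd (qmul (ma A) (ma B)) (qmul (mb A) (mc B)))
       (qadd (qmul (ma A) (mb B)) (qmul (mb A) (md B)))
       (qadd (qmul (mc A) (ma B)) (qmul (md A) (mc B)))
       (qadd (qmul (mc A) (mb B)) (qmul (md A) (md B))).
Definition mscale (l : R) (A : mat2) : mat2 :=
  Mat2 (qscale l (ma A)) (qscale l (mb A)) (qscale l (mc A)) (qscale l (md A)).
Definition mid : mat2 := Mat2 qone qzero qzero qone.

Definition proj_eq (A B : mat2) : Prop :=
  exists l : R, l <> 0 /\ A = mscale l B.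

Definition omega (b c d : Z) : quat := Quat 0 (IZR b) (IZR c) (IZR d).
Definition tau (w : quat) : mat2 := Mat2 qone w qzero qone.
(* T(q) = q^{-1} *)
Definition Tm : mat2 := Mat2 qzero qone qone qzero.

Definition hurwitz_unit (u : quat) : Prop :=
  u = Quat 1 0 0 0 \/ u = Quat (-1) 0 0 0 \/
  u = Quat 0 1 0 0 \/ u = Quat 0 (-1) 0 0 \/
  u = Quat 0 0 1 0 \/ u = Quat 0 0 (-1) 0 \/
  u = Quat 0 0 0 1 \/ u = Quat 0 0 0 (-1) \/
  (Rabs (qr u) = / 2 /\ Rabs (qi u) = / 2 /\ Rabs (qj u) = / 2 /\ Rabs (qk u) = / 2).

Definition Dm (u : quat) : mat2 := Mat2 u qzero qzero u.

Definition gens_L (g : mat2) : Prop :=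
  g = Tm \/ exists b c d : Z, g = tau (omega b c d).
Definition gens_H (g : mat2) : Prop :=
  gens_L g \/ exists u, hurwitz_unit u /\ g = Dm u.

(* The subgroup of PGL(2,H) (matrices modulo nonzero real scalars) generated
   by a set S of invertible matrices: finite products of generators and their
   inverses, taken up to real scalars. *)
Inductive gen_grp (S : mat2 -> Prop) : mat2 -> Prop :=
| gg_one : gen_grp S mid
| gg_mul : forall g h, S g -> gen_grp S h -> gen_grp S (mmul g h)
| gg_inv : forall g g' h, S g -> proj_eq (mmul g' g) mid ->
    proj_eq (mmul g g') mid -> gen_grp S h -> gen_grp S (mmul g' h)
| gg_proj : forall A B, gen_grp S A -> proj_eq B A -> gen_grp S B.

Definition PSL2_L : mat2 -> Prop := gen_grp gens_L.
Definition PSL2_H : mat2 -> Prop := gen_grp gens_H.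

Definition same_lcoset (L : mat2 -> Prop) (x y : mat2) : Prop :=
  exists l, L l /\ proj_eq y (mmul x l).

Definition subgroup_of (L G : mat2 -> Prop) : Prop :=
  forall A, L A -> G A.

Definition has_index (L G : mat2 -> Prop) (n : nat) : Prop :=
  exists g : nat -> mat2,
    (forall i, (i < n)%nat -> G (g i)) /\
    (forall i j, (i < n)%nat -> (j < n)%nat -> i <> j ->
        ~ same_lcoset L (g i) (g j)) /\
    (forall h, G h -> exists i, (i < n)%nat /\ same_lcoset L (g i) h).

(* Main.v *)
Require Import Defs.
From Stdlib Require Import Reals ZArith Arith Lra Lia.
Open Scope R_scope.


Ltac dq := repeat match goal with
  | q : quat |- _ => destruct q
  | m : mat2 |- _ => destruct m end.
Ltac meq := unfold mmul, mscale, mid, Tm, tau, Dm, omega in *; cbn [ma mb mc md] in *;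
  unfold qadd, qmul, qscale, qone, qzero in *; cbn [qr qi qj qk] in *;
  repeat match goal with
  | |- Mat2 _ _ _ _ = Mat2 _ _ _ _ => f_equal
  | |- Quat _ _ _ _ = Quat _ _ _ _ => f_equal end.

Lemma qmul_assoc a b c : qmul (qmul a b) c = qmul a (qmul b c).
Proof. destruct a, b, c; unfold qmul; cbn; f_equal; ring. Qed.
Lemma qmul_addl a b c : qmul (qadd a b) c = qadd (qmul a c) (qmul b c).
Proof. destruct a, b, c; unfold qmul, qadd; cbn; f_equal; ring. Qed.
Lemma qmul_addr a b c : qmul a (qadd b c) = qadd (qmul a b) (qmul a c).
Proof. destruct a, b, c; unfold qmul, qadd; cbn; f_equal; ring. Qed.
Lemma qadd_4 a b c d : qadd (qadd a b) (qadd c d) = qadd (qadd a c) (qadd b d).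
Proof. destruct a, b, c, d; unfold qadd; cbn; f_equal; ring. Qed.
Lemma mmul_assoc A B C : mmul (mmul A B) C = mmul A (mmul B C).
Proof. destruct A, B, C; unfold mmul; cbn; f_equal;
  rewrite ?qmul_addl, ?qmul_addr, ?qmul_assoc; apply qadd_4. Qed.
Lemma mmul_mid_r A : mmul A mid = A.
Proof. dq; meq; ring. Qed.
Lemma mmul_mid_l A : mmul mid A = A.
Proof. dq; meq; ring. Qed.
Lemma mmul_scale_l l A B : mmul (mscale l A) B = mscale l (mmul A B).
Proof. dq; meq; ring. Qed.
Lemma mmul_scale_r l A B : mmul A (mscale l B) = mscale l (mmul A B).
Proof. dq; meq; ring. Qed.
Lemma mscale_1 A : mscale 1 A = A.
Proof. dq; meq; ring. Qed.
Lemma mscale_scale a b A : mscale a (mscale b A) = mscale (a*b) A.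
Proof. dq; meq; ring. Qed.

Lemma proj_refl A : proj_eq A A.
Proof. exists 1; split; [lra| now rewrite mscale_1]. Qed.
Lemma proj_sym A B : proj_eq A B -> proj_eq B A.
Proof. intros [l [Hl ->]]. exists (/l); split; [now apply Rinv_neq_0_compat|].
  rewrite mscale_scale, Rinv_l by auto. now rewrite mscale_1. Qed.
Lemma proj_trans A B C : proj_eq A B -> proj_eq B C -> proj_eq A C.
Proof. intros [l [Hl ->]] [m [Hm ->]]. exists (l*m); split.
  - now apply Rmult_integral_contrapositive.
  - now rewrite mscale_scale. Qed.
Lemma proj_mul_l s A B : proj_eq A B -> proj_eq (mmul s A) (mmul s B).
Proof. intros [l [Hl ->]]. exists l; split; auto. apply mmul_scale_r. Qed.

Lemma gen_mul S A B : gen_grp S A -> gen_grp S B -> gen_grp S (mmul A B).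
Proof.
  intros HA; revert B; induction HA; intros C HB.
  - now rewrite mmul_mid_l.
  - rewrite mmul_assoc. apply gg_mul; auto.
  - rewrite mmul_assoc. eapply gg_inv; eauto.
  - destruct H as [l [Hl ->]]. rewrite mmul_scale_l. eapply gg_proj.
    apply IHHA, HB. exists l; auto.
Qed.

Lemma inv_scalar g g' gi : proj_eq (mmul g' g) mid -> mmul g gi = mid ->
  exists l, l <> 0 /\ g' = mscale l gi.
Proof.
  intros [l [Hl E]] E2. exists l; split; auto.
  rewrite <- (mmul_mid_r g'), <- E2, <- mmul_assoc, E, mmul_scale_l, mmul_mid_l.
  reflexivity.
Qed.


Definition lip (x : quat) : Prop :=
  exists a b c d : Z, x = Quat (IZR a) (IZR b) (IZR c) (IZR d).
Lemma lip_add x y : lip x -> lip y -> lip (qadd x y).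
Proof. intros (a&b&c&d&->) (a'&b'&c'&d'&->).
  exists (a+a')%Z, (b+b')%Z, (c+c')%Z, (d+d')%Z. unfold qadd; cbn.
  now rewrite !plus_IZR. Qed.
Lemma lip_mul x y : lip x -> lip y -> lip (qmul x y).
Proof. intros (a&b&c&d&->) (a'&b'&c'&d'&->).
  exists (a*a' - b*b' - c*c' - d*d')%Z, (a*b' + b*a' + c*d' - d*c')%Z,
    (a*c' - b*d' + c*a' + d*b')%Z, (a*d' + b*c' - c*b' + d*a')%Z.
  unfold qmul; cbn. f_equal; repeat rewrite ?minus_IZR, ?plus_IZR, ?mult_IZR; reflexivity. Qed.
Lemma lip_one : lip qone. Proof. now exists 1%Z, 0%Z, 0%Z, 0%Z. Qed.
Lemma lip_zero : lip qzero. Proof. now exists 0%Z, 0%Z, 0%Z, 0%Z. Qed.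
Lemma lip_omega b c d : lip (omega b c d). Proof. now exists 0%Z, b, c, d. Qed.
Lemma lip_neg x : lip x -> lip (qscale (-1) x).
Proof. intros (a&b&c&d&->). exists (-a)%Z, (-b)%Z, (-c)%Z, (-d)%Z.
  unfold qscale; cbn. rewrite !opp_IZR. f_equal; ring. Qed.

Definition Mr (X : mat2) (z : quat) : Prop :=
  exists x y, lip x /\ lip y /\ z = qadd (qmul (ma X) x) (qmul (mb X) y).
Definition Rel (Y X : mat2) : Prop :=
  exists mu, mu <> 0 /\ forall z, Mr Y z <-> Mr X (qscale mu z).

Lemma qscale_1 z : qscale 1 z = z.
Proof. dq; meq; ring. Qed.
Lemma qscale_scale a b z : qscale a (qscale b z) = qscale (a*b) z.
Proof. dq; meq; ring. Qed.

Lemma Rel_refl X : Rel X X.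
Proof. exists 1; split; [lra|]. intro z; now rewrite qscale_1. Qed.
Lemma Rel_trans Y X W : Rel Y X -> Rel X W -> Rel Y W.
Proof. intros [m [Hm H1]] [n [Hn H2]]. exists (n*m); split.
  - now apply Rmult_integral_contrapositive.
  - intro z. rewrite H1, H2, qscale_scale. tauto. Qed.
Lemma Rel_scale l X : l <> 0 -> Rel (mscale l X) X.
Proof.
  intros Hl. exists (/l); split; [now apply Rinv_neq_0_compat|]. intro z; split.
  - intros (x&y&Hx&Hy&->). exists x, y; repeat split; auto.
    destruct X; dq; meq; field; auto.
  - intros (x&y&Hx&Hy&E). exists x, y; repeat split; auto.
    assert (E2 := f_equal (qscale l) E). rewrite qscale_scale, Rinv_r, qscale_1 in E2 by auto.
    rewrite E2. destruct X; dq; meq; ring.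
Qed.
Lemma Rel_T X : Rel (mmul X Tm) X.
Proof.
  exists 1; split; [lra|]. intro z; rewrite qscale_1; split.
  - intros (x&y&Hx&Hy&->). exists y, x; repeat split; auto. dq; meq; ring.
  - intros (x&y&Hx&Hy&->). exists y, x; repeat split; auto. dq; meq; ring.
Qed.
Lemma Rel_tau X w : lip w -> Rel (mmul X (tau w)) X.
Proof.
  intros Hw. exists 1; split; [lra|]. intro z; rewrite qscale_1; split.
  - intros (x&y&Hx&Hy&->). exists (qadd x (qmul w y)), y; repeat split; auto.
    + apply lip_add; auto; apply lip_mul; auto.
    + dq; meq; ring.
  - intros (x&y&Hx&Hy&->). exists (qadd x (qmul (qscale (-1) w) y)), y; repeat split; auto.
    + apply lip_add; auto; apply lip_mul; auto; now apply lip_neg.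
    + dq; meq; ring.
Qed.

Lemma inv_gensL g : gens_L g -> exists gi, gens_L gi /\ mmul g gi = mid.
Proof.
  intros [->|(b&c&d&->)].
  - exists Tm; split; [now left|]. meq; ring.
  - exists (tau (omega (-b) (-c) (-d))); split; [right; eauto|].
    meq; rewrite ?opp_IZR; ring.
Qed.
Lemma Rel_gen X g : gens_L g -> Rel (mmul X g) X.
Proof. intros [->|(b&c&d&->)]; [apply Rel_T| apply Rel_tau, lip_omega]. Qed.

Lemma Rel_L l : PSL2_L l -> forall X, Rel (mmul X l) X.
Proof.
  induction 1 as [|g h Hg Hh IH|g g' h Hg P1 P2 Hh IH|A B HA IH HP]; intro X.
  - rewrite mmul_mid_r; apply Rel_refl.
  - rewrite <- mmul_assoc. eapply Rel_trans; [apply IH|]. now apply Rel_gen.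
  - rewrite <- mmul_assoc. eapply Rel_trans; [apply IH|].
    destruct (inv_gensL g Hg) as [gi [Hgi E]].
    destruct (inv_scalar g g' gi P1 E) as [l [Hl ->]].
    rewrite mmul_scale_r. eapply Rel_trans; [now apply Rel_scale|]. now apply Rel_gen.
  - destruct HP as [l [Hl ->]]. rewrite mmul_scale_r.
    eapply Rel_trans; [now apply Rel_scale| apply IH].
Qed.


Definition w1 := Quat (/2) (/2) (/2) (/2).
Definition w2 := Quat (-/2) (/2) (/2) (/2).
Definition pw (n : nat) : quat := match n with 0%nat => qone | 1%nat => w1 | _ => w2 end.
Definition gw (n : nat) : mat2 := Dm (pw n).
Definition qconj (u : quat) := Quat (qr u) (- qi u) (- qj u) (- qk u).

Definition lipunit (v : quat) : Prop :=
  v = Quat 1 0 0 0 \/ v = Quat (-1) 0 0 0 \/ v = Quat 0 1 0 0 \/ v = Quat 0 (-1) 0 0 \/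
  v = Quat 0 0 1 0 \/ v = Quat 0 0 (-1) 0 \/ v = Quat 0 0 0 1 \/ v = Quat 0 0 0 (-1).

Lemma Rabs_half x : Rabs x = /2 -> x = /2 \/ x = -/2.
Proof. unfold Rabs; destruct (Rcase_abs x); intros; lra. Qed.

Ltac hu_destruct H :=
  let a := fresh "a" in let b := fresh "b" in let c := fresh "c" in let d := fresh "d" in
  let H1 := fresh in let H2 := fresh in let H3 := fresh in let H4 := fresh in
  destruct H as [->|[->|[->|[->|[->|[->|[->|[->|[H1 [H2 [H3 H4]]]]]]]]]]];
  [..| match goal with u : quat |- _ => destruct u as [a b c d] end; cbn in H1, H2, H3, H4;
    destruct (Rabs_half _ H1) as [->| ->]; destruct (Rabs_half _ H2) as [->| ->];
    destruct (Rabs_half _ H3) as [->| ->]; destruct (Rabs_half _ H4) as [->| ->]].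

Ltac qconst := unfold pw, w1, w2, qconj in *; meq; lra.
Ltac lipu := first [ left; qconst | right; lipu | qconst ].
Ltac pick_j j := exists j; split; [lia|];
  match goal with |- exists v, _ /\ ?X = qmul ?P v =>
    exists (qmul (qconj P) X); split; [unfold lipunit; lipu | qconst] end.



Lemma unit_coset u i : hurwitz_unit u -> (i < 3)%nat ->
  exists j, (j < 3)%nat /\ exists v, lipunit v /\ qmul u (pw i) = qmul (pw j) v.
Proof.
  intros H Hi. destruct i as [|[|[|i]]]; [..|lia]; hu_destruct H;
  first [pick_j 0%nat | pick_j 1%nat | pick_j 2%nat].
Qed.


Lemma conj_tau i b c d : (i < 3)%nat -> exists b' c' d',
  mmul (tau (omega b c d)) (gw i) = mmul (gw i) (tau (omega b' c' d')).
Proof.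
  intros Hi. destruct i as [|[|[|i]]]; [..|lia].
  - exists b, c, d. unfold gw, pw, w1, w2. meq; ring.
  - exists c, d, b. unfold gw, pw, w1, w2. meq; field.
  - exists d, b, c. unfold gw, pw, w1, w2. meq; field.
Qed.

Lemma T_comm p : mmul Tm (Dm p) = mmul (Dm p) Tm.
Proof. dq; meq; ring. Qed.

Definition Dword (x : quat) :=
  mmul (tau x) (mmul Tm (mmul (tau x) (mmul Tm (mmul (tau x) (mmul Tm mid))))).
Lemma Dword_L b c d : PSL2_L (Dword (omega b c d)).
Proof.
  unfold Dword. assert (HT : gens_L Tm) by now left.
  assert (Ht : gens_L (tau (omega b c d))) by (right; eauto).
  repeat (apply gg_mul; auto). apply gg_one.
Qed.

Lemma Dword_eq x : Dword x = mmul (Mat2 x qone qone qzero) (mmul (Mat2 x qone qone qzero) (Mat2 x qone qone qzero)).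
Proof.
  assert (E : forall Y, mmul (tau x) (mmul Tm Y) = mmul (Mat2 x qone qone qzero) Y).
  { intro Y. rewrite <- mmul_assoc. f_equal. dq; meq; ring. }
  unfold Dword. rewrite !E, mmul_mid_r. reflexivity.
Qed.

Lemma lipunit_L v : lipunit v -> PSL2_L (Dm v).
Proof.
  assert (Hneg : forall v, PSL2_L (Dm v) -> PSL2_L (Dm (qscale (-1) v))).
  { intros v0 H. eapply gg_proj; [exact H|]. exists (-1); split; [lra|].
    dq; meq; ring. }
  assert (H1 : PSL2_L (Dm (Quat 1 0 0 0))) by apply gg_one.
  assert (Hi : PSL2_L (Dm (Quat 0 1 0 0))).
  { eapply gg_proj; [apply (Dword_L 1 0 0)|]. exists 1; split; [lra|]. rewrite Dword_eq; meq; ring. }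
  assert (Hj : PSL2_L (Dm (Quat 0 0 1 0))).
  { eapply gg_proj; [apply (Dword_L 0 1 0)|]. exists 1; split; [lra|]. rewrite Dword_eq; meq; ring. }
  assert (Hk : PSL2_L (Dm (Quat 0 0 0 1))).
  { eapply gg_proj; [apply (Dword_L 0 0 1)|]. exists 1; split; [lra|]. rewrite Dword_eq; meq; ring. }
  intros [->|[->|[->|[->|[->|[->|[->| ->]]]]]]]; auto;
  match goal with
  | |- PSL2_L (Dm (Quat (-1) 0 0 0)) => replace (Quat (-1) 0 0 0) with (qscale (-1) (Quat 1 0 0 0))
  | |- PSL2_L (Dm (Quat 0 (-1) 0 0)) => replace (Quat 0 (-1) 0 0) with (qscale (-1) (Quat 0 1 0 0))
  | |- PSL2_L (Dm (Quat 0 0 (-1) 0)) => replace (Quat 0 0 (-1) 0) with (qscale (-1) (Quat 0 0 1 0))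
  | |- PSL2_L (Dm (Quat 0 0 0 (-1))) => replace (Quat 0 0 0 (-1)) with (qscale (-1) (Quat 0 0 0 1))
  end; auto; unfold qscale; cbn; f_equal; ring.
Qed.



Lemma hu_conj u : hurwitz_unit u -> hurwitz_unit (qconj u) /\ mmul (Dm u) (Dm (qconj u)) = mid.
Proof.
  intros H. hu_destruct H; split; unfold hurwitz_unit, qconj; cbn;
  try (meq; field);
  try (do 8 right; rewrite ?Rabs_Ropp, ?Rabs_pos_eq by lra; lra);
  repeat (first [left; f_equal; ring | right]); f_equal; ring.
Qed.


Definition Cov (h : mat2) : Prop :=
  exists i, (i < 3)%nat /\ exists l, PSL2_L l /\ proj_eq h (mmul (gw i) l).

Lemma Dm_mul u p : mmul (Dm u) (Dm p) = Dm (qmul u p).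
Proof. dq; meq; ring. Qed.

Lemma Cov_proj A B : Cov A -> proj_eq B A -> Cov B.
Proof. intros (i&Hi&l&Hl&P) P2. exists i; split; auto. exists l; split; auto.
  eapply proj_trans; eauto. Qed.

Lemma Cov_gen s h : gens_H s -> Cov h -> Cov (mmul s h).
Proof.
  intros Hs (i&Hi&l&Hl&P).
  apply (Cov_proj (mmul s (mmul (gw i) l))); [| now apply proj_mul_l].
  rewrite <- mmul_assoc.
  destruct Hs as [[->|(b&c&d&->)]|(u&Hu&->)].
  - unfold gw; rewrite T_comm, mmul_assoc. exists i; split; auto.
    exists (mmul Tm l); split; [apply gg_mul; auto; now left| apply proj_refl].
  - destruct (conj_tau i b c d Hi) as (b'&c'&d'&E). rewrite E, mmul_assoc.
    exists i; split; auto. exists (mmul (tau (omega b' c' d')) l); split;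
      [apply gg_mul; auto; right; eauto| apply proj_refl].
  - unfold gw. rewrite Dm_mul. destruct (unit_coset u i Hu Hi) as (j&Hj&v&Hv&E).
    rewrite E, <- Dm_mul, mmul_assoc. exists j; split; auto.
    exists (mmul (Dm v) l); split; [apply gen_mul; auto; now apply lipunit_L| apply proj_refl].
Qed.

Lemma inv_gensH g : gens_H g -> exists gi, gens_H gi /\ mmul g gi = mid.
Proof.
  intros [HL|(u&Hu&->)].
  - destruct (inv_gensL g HL) as (gi&H1&H2). exists gi; split; auto. now left.
  - destruct (hu_conj u Hu) as [H1 H2]. exists (Dm (qconj u)); split; auto.
    right; eauto.
Qed.

Lemma coverage h : PSL2_H h -> Cov h.
Proof.
  induction 1 as [|g h Hg Hh IH|g g' h Hg P1 P2 Hh IH|A B HA IH HP].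
  - exists 0%nat; split; [lia|]. exists mid; split; [apply gg_one|].
    unfold gw, pw. change (Dm qone) with mid. rewrite mmul_mid_r. apply proj_refl.
  - now apply Cov_gen.
  - destruct (inv_gensH g Hg) as (gi&Hgi&E).
    destruct (inv_scalar g g' gi P1 E) as (l&Hl&->).
    apply (Cov_proj (mmul gi h)); [now apply Cov_gen|].
    exists l; split; auto. apply mmul_scale_l.
  - eapply Cov_proj; eauto.
Qed.


Lemma int_quarter (k : Z) : IZR k = /4 -> False.
Proof. intro H. assert (H2 : IZR (4 * k) = IZR 1) by (rewrite mult_IZR, H; simpl; lra).
  apply eq_IZR in H2. lia. Qed.

Ltac key_tac p q :=
  let mu := fresh "mu" in let Hmu := fresh in let H := fresh in
  intros mu Hmu H;
  let A1 := fresh in let A2 := fresh in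
  assert (A1 : Mr (Dm q) q) by (exists qone, qzero; split; [apply lip_one|split; [apply lip_zero|]]; unfold w1, w2; meq; ring);
  assert (A2 : Mr (Dm p) (qscale mu (qscale (/mu) p))) by
    (exists qone, qzero; split; [apply lip_one|split; [apply lip_zero|]]; unfold w1, w2; meq; field; auto);
  apply H in A1; apply H in A2;
  destruct A1 as (x&y&Hx&Hy&E1); destruct A2 as (x'&y'&Hx'&Hy'&E2);
  destruct Hx as (a0&a1&a2&a3&->); destruct Hy as (c0&c1&c2&c3&->);
  destruct Hx' as (b0&b1&b2&b3&->); destruct Hy' as (d0&d1&d2&d3&->);
  unfold w1, w2 in E1, E2; meq; injection E1 as e1 e2 e3 e4; injection E2 as f1 f2 f3 f4;
  set (t := / mu) in *;
  let F1 := fresh in let F2 := fresh in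
  assert (F1 : IZR a0 = mu * qr (qmul (qconj p) q)) by (unfold w1, w2, qconj, qmul, qone; cbn [qr qi qj qk]; lra);
  assert (F2 : IZR b0 = t * qr (qmul (qconj q) p)) by (unfold w1, w2, qconj, qmul, qone; cbn [qr qi qj qk]; lra);
  assert (R : qr (qmul (qconj p) q) * qr (qmul (qconj q) p) = /4) by (unfold w1, w2, qconj, qmul, qone; cbn [qr qi qj qk]; lra);
  assert (MT : mu * t = 1) by (unfold t; field; auto);
  apply (int_quarter (a0 * b0)); rewrite mult_IZR, F1, F2, <- R;
  replace (mu * qr (qmul (qconj p) q) * (t * qr (qmul (qconj q) p))) with
     ((mu * t) * (qr (qmul (qconj p) q) * qr (qmul (qconj q) p))) by ring;
  rewrite MT; ring.

Lemma key01 : forall mu, mu <> 0 -> (forall z, Mr (Dm w1) z <-> Mr (Dm qone) (qscale mu z)) -> False.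
Proof. key_tac qone w1. Qed.

Lemma distinct i j : (i < 3)%nat -> (j < 3)%nat -> i <> j ->
  ~ same_lcoset PSL2_L (gw i) (gw j).
Proof.
  intros Hi Hj Hij (l&Hl&P).
  assert (HR : Rel (gw j) (gw i)).
  { destruct P as (k&Hk&E). rewrite E. eapply Rel_trans; [now apply Rel_scale|].
    now apply Rel_L. }
  destruct HR as (mu&Hmu&H). revert mu Hmu H. unfold gw, pw.
  destruct i as [|[|[|i]]]; [..|lia]; destruct j as [|[|[|j]]]; try lia.
  - key_tac qone w1.
  - key_tac qone w2.
  - key_tac w1 qone.
  - key_tac w1 w2.
  - key_tac w2 qone.
  - key_tac w2 w1.
Qed.


Lemma sub_LH : subgroup_of PSL2_L PSL2_H.
Proof.
  intros A HA. unfold PSL2_H. induction HA.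
  - apply gg_one.
  - apply gg_mul; auto. now left.
  - eapply gg_inv; eauto. now left.
  - eapply gg_proj; eauto.
Qed.

Lemma gw_H i : (i < 3)%nat -> PSL2_H (gw i).
Proof.
  intros Hi. assert (HD : forall u, hurwitz_unit u -> PSL2_H (Dm u)).
  { intros u Hu. eapply gg_proj; [apply (gg_mul _ (Dm u) mid); [right; eauto| apply gg_one]|].
    rewrite mmul_mid_r. apply proj_refl. }
  destruct i as [|[|[|i]]]; [..|lia]; unfold gw, pw.
  - apply gg_one.
  - apply HD. do 8 right. unfold w1; cbn. rewrite Rabs_pos_eq by lra. auto.
  - apply HD. do 8 right. unfold w2; cbn. rewrite Rabs_Ropp, Rabs_pos_eq by lra. auto.
Qed.

Theorem mainTheorem4 :
  subgroup_of PSL2_L PSL2_H /\ has_index PSL2_L PSL2_H 3.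
Proof.
  split; [apply sub_LH|].
  exists gw; split; [|split].
  - apply gw_H.
  - apply distinct.
  - intros h Hh. destruct (coverage h Hh) as (i&Hi&l&Hl&P).
    exists i; split; auto. exists l; split; auto.
Qed.
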